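(* Let $G$ be a bipartite graph with bipartition $(A,B)$, and let $A$ be the union of disjoint sets $A_1,A_2$, each of which is laminar in $G$. Then the following are equivalent: (a) every hole of $G$ has length four; (b) there is a tree $T$ with $V(T)=B$ such that for each $a\in A$, $N(a)$ is the vertex set of a subtree of $T$.
   Context: A hole is an induced cycle of length at least four. $N(a)$ denotes the set of neighbours of $a$. A set $A'\subseteq A$ is laminar in $G$ if for all distinct $a,a'\in A'$, either $N(a)\subseteq N(a')$, or $N(a')\subseteq N(a)$, or $N(a)\cap N(a')=\emptyset$. *)

(* Defs.v *)
From mathcomp Require Import all_boot.
Set Implicit Arguments.
Unset Strict Implicit.
Unset Printing Implicit Defensive.

Section Graphs.
Variable V : finType.

Definition simple_graph (adj : rel V) : Prop :=
  symmetric adj /\ irreflexive adj.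

Definition nbhd (adj : rel V) (a : V) : {set V} := [set x | adj a x].

Definition bipartition (adj : rel V) (A B : {set V}) : Prop :=
  [disjoint A & B] /\ A :|: B = [set: V] /\
  (forall x y, adj x y -> (x \in A /\ y \in B) \/ (x \in B /\ y \in A)).

Definition laminar (adj : rel V) (A' : {set V}) : Prop :=
  forall a a', a \in A' -> a' \in A' -> a != a' ->
    [|| nbhd adj a \subset nbhd adj a',
        nbhd adj a' \subset nbhd adj a
      | [disjoint nbhd adj a & nbhd adj a']].

Definition hole (adj : rel V) (c : seq V) : Prop :=
  3 < size c /\ uniq c /\
  forall (x0 : V) i j, i < size c -> j < size c ->
    adj (nth x0 c i) (nth x0 c j) =
      (j == i.+1 %% size c) || (i == j.+1 %% size c).

Definition connected_in (t : rel V) (S : {set V}) : Prop :=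
  forall x y, x \in S -> y \in S ->
    exists p : seq V, [&& path t x p, last x p == y & all (mem S) p].

Definition acyclic (t : rel V) : Prop :=
  forall c : seq V, 2 < size c -> uniq c -> ~~ cycle t c.

Definition tree_on (t : rel V) (B : {set V}) : Prop :=
  simple_graph t /\
  (forall x y, t x y -> x \in B /\ y \in B) /\
  connected_in t B /\ acyclic t.

End Graphs.

(* Main.v *)
Require Import Defs.
From mathcomp Require Import all_boot.
From mathcomp Require Import zify.
From Stdlib Require Import Classical.
Set Implicit Arguments.
Unset Strict Implicit.
Unset Printing Implicit Defensive.

Lemma nxE n x : x < n -> x.+1 %% n = if x.+1 == n then 0 else x.+1.
Proof. move=> h. case: ifP => /eqP e. by rewrite e modnn. by rewrite modn_small //; lia. Qed.

Section Walk.
Variable V : finType.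
Variable R : rel V.
Variable X : {set V}.
Hypothesis Rirr : irreflexive R.

Lemma cycle_of_nth (c : seq V) (x0 : V) :
  (forall l, l < size c -> R (nth x0 c l) (nth x0 c (l.+1 %% size c))) -> cycle R c.
Proof.
case: c => [|y c] // H.
rewrite (cycle_path x0); apply/(pathP x0) => i hi.
case: i hi => [|i] hi /=.
  have := H (size c) (ltnSn _). by rewrite /= modnn (last_nth x0).
have hi' : i < size c by [].
have := H i (leqW hi'). rewrite nxE /=; last by lia.
by case: ifP => [/eqP e|_]; [lia|].
Qed.

Lemma nth_of_cycle (c : seq V) (x0 : V) :
  cycle R c -> forall l, l < size c -> R (nth x0 c l) (nth x0 c (l.+1 %% size c)).
Proof.
case: c => [|y c] // H l hl.
move: H; rewrite (cycle_path x0) => /(pathP x0) H.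
rewrite nxE //; case: ifP => [/eqP e|ne].
  have := H 0 isT. rewrite /= (last_nth x0).
  by have -> : l = size c by move: e => /= [->].
have hl' : l.+1 < (size (y :: c)) by move: hl ne => /=; lia.
by have := H l.+1 hl'.
Qed.

Lemma walk_cycle :
  (exists x, x \in X) ->
  (forall x p, x \in X -> exists y, [&& y \in X, R x y & y != p]) ->
  exists c : seq V, [/\ 2 < size c, uniq c, {subset c <= X} & cycle R c].
Proof.
move=> [x0 hx0] Hn.
pose nxt (p x : V) := if [pick y | [&& y \in X, R x y & y != p]] is Some y then y else x.
have Hnxt : forall p x, x \in X -> [&& nxt p x \in X, R x (nxt p x) & nxt p x != p].
  move=> p x hx; rewrite /nxt; case: pickP => [y //|H0].
  by have [y hy] := Hn x p hx; rewrite H0 in hy.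
pose fix xs n : V * V := if n is n'.+1 then ((xs n').2, nxt (xs n').1 (xs n').2) else (x0, nxt x0 x0).
pose x n := (xs n).1.
have xS : forall n, x n.+1 = (xs n).2 by [].
have xSS : forall n, x n.+2 = nxt (x n) (x n.+1) by [].
have inX : forall n, x n \in X /\ (xs n).2 \in X.
  elim=> [|n [h1 h2]] /=; first by split=> //; case/and3P: (Hnxt x0 x0 hx0).
  by split=> //; case/and3P: (Hnxt (xs n).1 (xs n).2 h2).
have Rx : forall n, R (x n) (x n.+1).
  case=> [|n]; first by rewrite xS /=; case/and3P: (Hnxt x0 x0 hx0).
  by rewrite xSS xS; case/and3P: (Hnxt (x n) (x n.+1) (inX n.+1).1).
have nb : forall n, x n.+2 != x n.
  by move=> n; rewrite xSS; case/and3P: (Hnxt (x n) (x n.+1) (inX n.+1).1).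
pose f (i : 'I_(#|V|.+1)) := x i.
have : ~~ injectiveb f.
  apply/negP => /injectiveP inj; have := leq_card _ inj; by rewrite card_ord ltnn.
move=> /injectivePn [i [j ij fij]].
pose P j := [exists i : 'I_j, x i == x j].
have exP : exists j, P j.
  case: (ltngtP i j) => [lt|lt|e]; last by move: ij; rewrite -val_eqE /= e eqxx.
    by exists j; apply/existsP; exists (Ordinal lt); apply/eqP.
  by exists i; apply/existsP; exists (Ordinal lt); apply/eqP.
have [j0 Pj0 minj] := ex_minnP exP.
move: Pj0 => /existsP [[i0 hi0] /= /eqP e0].
have dist : forall a b, a < b -> b < j0 -> x a != x b.
  move=> a b ab bj; apply/negP => /eqP e.
  have : P b by apply/existsP; exists (Ordinal ab); apply/eqP.
  by move/minj; lia.
pose L := j0 - i0.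
exists (mkseq (fun l => x (i0 + l)) L).
have L2 : 2 < L.
  rewrite /L; case: (ltngtP (j0 - i0) 3) => // h.
  have [h1|h2] : j0 = i0.+1 \/ j0 = i0.+2 by lia.
    by move: (Rx i0); rewrite -h1 -e0 Rirr.
  by move: (nb i0); rewrite -h2 e0 eqxx.
split; rewrite ?size_mkseq //.
- rewrite map_inj_in_uniq ?iota_uniq // => a b; rewrite !mem_iota !add0n => ha hb e.
  case: (ltngtP a b) => // h; exfalso.
    by move: (dist (i0 + a) (i0 + b)); rewrite e eqxx; move/(_ _ _)/negP; apply; lia.
  by move: (dist (i0 + b) (i0 + a)); rewrite e eqxx; move/(_ _ _)/negP; apply; lia.
- by move=> y /mapP [l _ ->]; exact: (inX _).1.
- apply: (@cycle_of_nth _ x0) => l; rewrite size_mkseq => hl.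
  rewrite nth_mkseq // nxE //; case: ifP => [/eqP e|ne].
    rewrite nth_mkseq; last lia. rewrite addn0.
    have -> : i0 = (i0 + l).+1 - L + i0 - i0 by lia.
    have -> : (i0 + l).+1 - L + i0 - i0 = i0 by lia.
    have : x (i0 + l).+1 = x i0 by rewrite e0; congr x; lia.
    by move=> <-; apply: Rx.
  rewrite nth_mkseq; last lia. by rewrite addnS; apply: Rx.
Qed.
End Walk.


Section TreeL.
Variable V : finType.
Variable t : rel V.
Hypotheses (tsym : symmetric t) (tirr : irreflexive t) (tacy : acyclic t).

Definition leafin (X : {set V}) (l : V) :=
  forall y y', y \in X -> y' \in X -> t l y -> t l y' -> y = y'.

Lemma conn_nbr (W : {set V}) (l x : V) : connected_in t W -> l \in W -> x \in W -> x != l ->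
  exists2 y, y \in W & t l y.
Proof.
move=> HW lW xW xl; have [p /and3P[pp lp ap]] := HW l x lW xW.
case: p pp lp ap => [|y p] /=; first by move=> _ /eqP e; move: xl; rewrite e eqxx.
by move=> /andP[tly _] _ /andP[yW _]; exists y.
Qed.

Lemma conn_remove (X W : {set V}) (l : V) : connected_in t W -> W \subset X -> leafin X l ->
  connected_in t (W :\ l).
Proof.
move=> HW sWX Hl x y; rewrite !in_setD1 => /andP[xl xW] /andP[yl yW].
have [p /and3P[pp lp ap]] := HW x y xW yW.
case: (shortenP pp) lp => p' pp' up' sub /eqP lst.
exists p'; rewrite pp' /= lst eqxx /=.
apply/allP => v vp'; rewrite /= in_setD1.
have vW : v \in W by have := allP ap v (sub v vp').
rewrite vW andbT; apply/negP => /eqP ev; subst v.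
move: up' pp' lst sub; case/splitPr: vp' => p1 p2.
case: p2 => [|w p3].
  by rewrite last_cat /= => _ _ e; move: yl; rewrite -e eqxx.
rewrite -cat_cons cat_uniq => /and3P[_ hd _].
rewrite cat_path /= => /andP[_ /and3P[t1 t2 _]] _ sub.
have l1W : last x p1 \in W.
  have := mem_last x p1; rewrite inE => /orP[/eqP->//|lp1].
  by apply: (allP ap); apply: sub; rewrite mem_cat lp1.
have wW : w \in W.
  by apply: (allP ap); apply: sub; rewrite mem_cat !inE eqxx !orbT.
have e : last x p1 = w.
  by apply: (Hl) => //; [apply: (subsetP sWX) | apply: (subsetP sWX) | rewrite tsym].
by move: hd; rewrite -e /= inE mem_last orbT.
Qed.

Lemma tree_sets (S : nat -> {set V}) (k : nat) : 0 < k ->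
  (forall m, S (m + k) = S m) -> (forall m, connected_in t (S m)) ->
  (forall m, S m :&: S m.+1 != set0) -> (forall m, S m :&: S m.+2 = set0) -> False.
Proof.
move=> k0.
suff H : forall n (X : {set V}) (S : nat -> {set V}), #|X| <= n ->
  (forall m, S m \subset X) -> (forall m, S (m + k) = S m) ->
  (forall m, connected_in t (S m)) ->
  (forall m, S m :&: S m.+1 != set0) -> (forall m, S m :&: S m.+2 = set0) -> False.
  by move=> P C I D; apply: (H _ [set: V] S (leqnn _)) => // m; apply: subsetT.
elim=> [|n IH] X S' cX sX P C I D.
  have /set0Pn [z] := I 0; rewrite inE => /andP[z0 _].
  by move: cX; rewrite leqn0 => /eqP/cards0_eq X0; move: (subsetP (sX 0) z z0); rewrite X0 inE.
have /set0Pn [z] := I 0; rewrite inE => /andP[z0 _].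
have zX : z \in X by apply: (subsetP (sX 0)).
case: (classic (exists2 l, l \in X & leafin X l)) => [[l lX Hl]|NL].
- apply: (IH (X :\ l) (fun m => S' m :\ l)).
  + by move: cX; rewrite (cardsD1 l X) lX.
  + by move=> m; apply/subsetP => v; rewrite !in_setD1 => /andP[-> /(subsetP (sX m))].
  + by move=> m /=; rewrite P.
  + by move=> m; apply: (conn_remove (C m) (sX m) Hl).
  + move=> m; apply/negP => /eqP E.
    have sub1 : forall v, v \in S' m -> v \in S' m.+1 -> v = l.
      move=> v h1 h2; apply/eqP; apply/negPn/negP => vl.
      by have := in_set0 v; rewrite -E !inE vl h1 h2.
    have /set0Pn [w] := I m; rewrite inE => /andP[w1 w2].
    have wl := sub1 w w1 w2; subst w.
    case: (classic (exists2 x, x \in S' m & x != l)) => [[x x1 xl]|N1].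
      case: (classic (exists2 x, x \in S' m.+1 & x != l)) => [[x' x2 xl']|N2].
        have [y y1 ty] := conn_nbr (C m) w1 x1 xl.
        have [y' y2 ty'] := conn_nbr (C m.+1) w2 x2 xl'.
        have yy : y = y'.
          by apply: Hl => //; [apply: (subsetP (sX m)) | apply: (subsetP (sX m.+1))].
        subst y'; have := sub1 y y1 y2 => e; subst y.
        by rewrite tirr in ty.
      have /set0Pn [u] := I m.+1; rewrite inE => /andP[u1 u2].
      have ul : u = l by apply/eqP; apply/negPn/negP => h; apply: N2; exists u.
      subst u.
      by have := in_set0 l; rewrite -(D m) inE w1 u2.
    have /set0Pn [u] := I (m + k).-1.
    have -> : ((m + k).-1).+1 = m + k by lia.
    rewrite P inE => /andP[u1 u2].
    have ul : u = l by apply/eqP; apply/negPn/negP => h; apply: N1; exists u.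
    subst u.
    have := in_set0 l; rewrite -(D (m + k).-1).
    have -> : ((m + k).-1).+2 = m.+1 + k by lia.
    by rewrite P inE u1 w2.
  + by move=> m; apply/eqP; rewrite -subset0; apply/subsetP => v;
      rewrite inE => /andP[]; rewrite !in_setD1 => /andP[_ h1] /andP[_ h2];
      rewrite -(D m) inE h1 h2.
- have [c [c2 uc _ cc]] : exists c : seq V, [/\ 2 < size c, uniq c, {subset c <= X} & cycle t c].
    apply: walk_cycle => //; first by exists z.
    move=> x p xX; apply: NNPP => NE; apply: NL; exists x => // y y' yX y'X ty ty'.
    have ey : y = p by apply/eqP; apply/negPn/negP => h; apply: NE; exists y; rewrite yX ty h.
    have ey' : y' = p by apply/eqP; apply/negPn/negP => h; apply: NE; exists y'; rewrite y'X ty' h.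
    by rewrite ey ey'.
  by move: (tacy c2 uc); rewrite cc.
Qed.
End TreeL.


Lemma nxP n x : x < n -> (x.+1 %% n = x.+1 /\ x.+1 < n) \/ (x.+1 %% n = 0 /\ x.+1 = n).
Proof. move=> h; rewrite nxE //; case: ifP => /eqP e; [right|left]; lia. Qed.

Lemma nx_mod n x : (x %% n).+1 %% n = x.+1 %% n.
Proof. by rewrite -addn1 modnDml addn1. Qed.

Lemma arith_sub n p q r : 4 < n -> p < n -> q < n -> r < n -> p != q ->
  r.+1 %% n = p -> r = q.+1 %% n ->
  (p.+1 %% n = q.+1 %% n \/ q = (p.+1 %% n).+1 %% n) -> False.
Proof.
move=> n4 pn qn rn pq hr rq H.
have hp := nxP pn; have hq := nxP qn; have hr' := nxP rn.
have pn1 : p.+1 %% n < n by rewrite ltn_mod; lia.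
have hpp := nxP pn1.
case: H => H; case: hp => [[e1 b1]|[e1 b1]]; case: hq => [[e2 b2]|[e2 b2]];
  case: hr' => [[e3 b3]|[e3 b3]]; rewrite ?e1 ?e2 ?e3 in H hr rq hpp |- *; try lia;
  case: hpp => [[e4 b4]|[e4 b4]]; rewrite ?e4 in H; lia.
Qed.

Section BA.
Variables (V : finType) (adj : rel V) (A B A1 A2 : {set V}).
Hypotheses (Hs : simple_graph adj) (Hb : bipartition adj A B) (HA : A = A1 :|: A2)
  (Hd : [disjoint A1 & A2]) (L1 : laminar adj A1) (L2 : laminar adj A2).

Lemma sideAB v : (v \in A) || (v \in B).
Proof. by case: Hb => _ [E _]; rewrite -in_setU E inE. Qed.
Lemma notAB v : v \in A -> v \in B -> False.
Proof. by case: Hb => D _ hA hB; move: (disjointFr D hA); rewrite hB. Qed.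
Lemma edgeAB u v : adj u v -> u \in A -> v \in B.
Proof.
case: Hb => _ [_ E] /E [[_ ->]//|[hB hA] hA'].
by exfalso; apply: (notAB hA' hB).
Qed.
Lemma edgeBA u v : adj u v -> u \in B -> v \in A.
Proof.
case: Hb => _ [_ E] /E [[hA _] hB|[_ ->]//].
by exfalso; apply: (notAB hA hB).
Qed.
Lemma inA12 v : v \in A -> (v \in A1) || (v \in A2).
Proof. by rewrite HA inE. Qed.
Lemma not12 v : v \in A1 -> v \in A2 -> False.
Proof. by move=> h1 h2; move: (disjointFr Hd h1); rewrite h2. Qed.

Lemma b_to_a (t : rel V) : tree_on t B ->
  (forall a, a \in A -> connected_in t (nbhd adj a)) ->
  forall c, hole adj c -> size c = 4.
Proof.
move=> [[tsym tirr] [tB [tconn tacy]]] Hconn c [c3 [uc Hh]].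
case: Hs => asym airr.
apply/eqP; apply/negPn/negP => n4.
have n5 : 4 < size c by lia.
have [x0 _] : exists x0 : V, x0 \in c by case: c c3 {uc Hh n4 n5} => [|y ?] //; exists y; rewrite inE eqxx.
set n := size c in c3 n4 n5 Hh.
pose C i := nth x0 c i.
pose nx i := i.+1 %% n.
have nxn : forall i, nx i < n by move=> i; rewrite ltn_mod; lia.
have H i j : i < n -> j < n -> adj (C i) (C j) = (j == nx i) || (i == nx j) by apply: Hh.
have F1 i : i < n -> adj (C i) (C (nx i)) by move=> hi; rewrite H ?eqxx.
have Cinj i j : i < n -> j < n -> C i = C j -> i = j.
  by move=> hi hj /eqP; rewrite /C nth_uniq // => /eqP.
pose s := if C 0 \in A then 0 else 1.
have sA : C s \in A.
  rewrite /s; case: ifP => // hA.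
  have h01 : 0 < n by lia.
  have := F1 0 h01; rewrite /nx modn_small; last lia.
  move/edgeBA; apply; have := sideAB (C 0); by rewrite hA.
pose pos m := (s + 2 * m) %% n.
have posn m : pos m < n by rewrite ltn_mod; lia.
have posS m : pos m.+1 = nx (nx (pos m)).
  by rewrite /pos /nx (nx_mod n (s + 2 * m)) nx_mod; congr modn; lia.
have posP m : pos (m + n) = pos m.
  by rewrite /pos (_ : s + 2 * (m + n) = 2 * n + (s + 2 * m)) ?modnMDl //; lia.
have inA m : C (pos m) \in A.
  elim: m => [|m IH].
    by rewrite /pos muln0 addn0 modn_small; [exact: sA | rewrite /s; case: ifP => _; lia].
  rewrite posS; apply: (edgeBA (F1 _ (nxn _))); apply: (edgeAB (F1 _ (posn m))) IH.
have sub_false p q : p < n -> q < n -> p != q ->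
    nbhd adj (C p) \subset nbhd adj (C q) -> False.
  move=> pn qn pq /subsetP S.
  have h1 : adj (C q) (C (nx p)).
    by have := S (C (nx p)); rewrite !inE; apply; apply: F1.
  pose r := if p == 0 then n.-1 else p.-1.
  have rn : r < n by rewrite /r; case: ifP; lia.
  have hr : nx r = p.
    rewrite /nx; case: (nxP rn) => [[-> h]|[-> h]]; move: h; rewrite /r; case: ifP => /eqP; lia.
  have h2 : adj (C q) (C r).
    have := S (C r); rewrite !inE asym; apply.
    by have := F1 r rn; rewrite hr.
  rewrite H // in h1; rewrite H // in h2.
  case/orP: h2 => /eqP h2; last by move: pq; rewrite h2 hr eqxx.
  apply: (arith_sub n5 pn qn rn pq hr h2).
  by case/orP: h1 => /eqP h1; [left|right].
have KL p q : p < n -> q < n -> p != q ->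
    ((C p \in A1) && (C q \in A1)) || ((C p \in A2) && (C q \in A2)) ->
    nbhd adj (C p) :&: nbhd adj (C q) = set0.
  move=> pn qn pq hc.
  have Cpq : C p != C q by apply/negP => /eqP /(Cinj _ _ pn qn) e; move: pq; rewrite e eqxx.
  have : [|| nbhd adj (C p) \subset nbhd adj (C q), nbhd adj (C q) \subset nbhd adj (C p)
           | [disjoint nbhd adj (C p) & nbhd adj (C q)]].
    by case/orP: hc => /andP[h1 h2]; [apply: L1 | apply: L2].
  case/or3P => [h|h|h].
  - by exfalso; apply: (sub_false p q).
  - by exfalso; apply: (sub_false q p) => //; rewrite eq_sym.
  - by apply/eqP; rewrite setI_eq0.
have pos1 m : pos m != pos m.+1.
  rewrite posS /nx; have := posn m; move: (pos m) => x hx.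
  have := nxP hx; have hx1 : x.+1 %% n < n by rewrite ltn_mod; lia.
  have := nxP hx1; lia.
have pos2 m : pos m != pos m.+2.
  rewrite !posS /nx; have := posn m; move: (pos m) => x hx.
  have hx1 : x.+1 %% n < n by rewrite ltn_mod; lia.
  have hx2 : (x.+1 %% n).+1 %% n < n by rewrite ltn_mod; lia.
  have hx3 : ((x.+1 %% n).+1 %% n).+1 %% n < n by rewrite ltn_mod; lia.
  have := nxP hx; have := nxP hx1; have := nxP hx2; have := nxP hx3; lia.
have inter m : C (nx (pos m)) \in nbhd adj (C (pos m)) :&: nbhd adj (C (pos m.+1)).
  rewrite !inE F1 //= posS asym; apply: F1; apply: nxn.
have alt m : ((C (pos m) \in A1) && (C (pos m.+1) \in A2)) ||
             ((C (pos m) \in A2) && (C (pos m.+1) \in A1)).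
  have := inA12 (inA m); have := inA12 (inA m.+1).
  case/orP => h1; case/orP => h2; rewrite ?h1 ?h2 ?orbT //.
  - have := KL _ _ (posn m) (posn m.+1) (pos1 m); rewrite h1 h2 => /(_ isT) E.
    by have := inter m; rewrite E inE.
  - have := KL _ _ (posn m) (posn m.+1) (pos1 m); rewrite h1 h2 orbT => /(_ isT) E.
    by have := inter m; rewrite E inE.
apply: (@tree_sets _ t tsym tirr tacy (fun m => nbhd adj (C (pos m))) n).
- lia.
- by move=> m /=; rewrite posP.
- by move=> m; apply: Hconn; apply: inA.
- move=> m; apply/set0Pn; exists (C (nx (pos m))); apply: inter.
- move=> m; apply: KL => //.
  have := alt m; have := alt m.+1.
  case/orP => /andP[h1 h2]; case/orP => /andP[h3 h4];
    first [ by rewrite h2 h3 | by rewrite h2 h3 orbT | by exfalso; apply: (not12 h1 h4)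
          | by exfalso; apply: (not12 h4 h1) ].
Qed.
End BA.


Lemma card1eq (T : finType) (W : {set T}) x y : #|W| <= 1 -> x \in W -> y \in W -> x = y.
Proof. by move/card_le1_eqP => H hx hy; apply: H. Qed.

Section AB.
Variables (V : finType) (adj : rel V) (A B : {set V}).
Hypotheses (Hs : simple_graph adj) (Hb : bipartition adj A B)
  (Hhole : forall c : seq V, hole adj c -> size c = 4).

Let asym : symmetric adj. Proof. by case: Hs. Qed.
Let airr : irreflexive adj. Proof. by case: Hs. Qed.

Lemma nAB v : v \in A -> v \in B -> False.
Proof. by case: Hb => D _ hA hB; move: (disjointFr D hA); rewrite hB. Qed.
Lemma eAB u v : adj u v -> u \in A -> v \in B.
Proof.
case: Hb => _ [_ E] /E [[_ ->]//|[hB hA] hA'].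
by exfalso; apply: (nAB hA' hB).
Qed.
Lemma eBA u v : adj u v -> u \in B -> v \in A.
Proof.
case: Hb => _ [_ E] /E [[hA _] hB|[_ ->]//].
by exfalso; apply: (nAB hA hB).
Qed.

Definition tr (S : {set V}) a := nbhd adj a :&: S.
Definition Rp (S : {set V}) e w := (e != w) && [exists a, tr S a == [set e; w]].
Definition dom (S : {set V}) z := exists2 z', z' \in S &
  (z' != z) /\ (forall a, z \in tr S a -> 1 < #|tr S a| -> z' \in tr S a).

Lemma Rp_in (S : {set V}) (e w : V) : Rp S e w -> (e \in S) && (w \in S).
Proof.
case/andP => _ /existsP [a /eqP E].
have : e \in tr S a by rewrite E !inE eqxx.
have : w \in tr S a by rewrite E !inE eqxx orbT.
by rewrite !inE => /andP[_ ->] /andP[_ ->].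
Qed.

Lemma T1 (S : {set V}) (b z : V) : z != b -> dom (S :\ b) z -> ~~ Rp S b z -> dom S z.
Proof.
move=> zb [z' z'S [z'z H]] NR; exists z'; first by move: z'S; rewrite in_setD1 => /andP[].
split=> // a hz hb.
have E : tr (S :\ b) a = tr S a :\ b by rewrite /tr setIDA.
case: (boolP (1 < #|tr S a :\ b|)) => big'.
  have : z \in tr (S :\ b) a by rewrite E in_setD1 zb hz.
  by move/H; rewrite E big' => /(_ isT); rewrite in_setD1 => /andP[].
exfalso; move: NR => /negP; apply.
have := cardsD1 b (tr S a).
case: (boolP (b \in tr S a)) => hbt /= C; last by lia.
have C1 : #|tr S a :\ b| == 1 by lia.
case/cards1P: C1 => x Ex.
have xz : x = z.
  have : z \in tr S a :\ b by rewrite in_setD1 zb hz.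
  by rewrite Ex inE => /eqP.
subst x.
rewrite /Rp eq_sym zb /=; apply/existsP; exists a.
by rewrite -(setD1K hbt) Ex.
Qed.

Lemma dom_uniq (S : {set V}) (z u v : V) : dom S z -> Rp S z u -> Rp S z v -> u = v.
Proof.
move=> [z' _ [z'z H]].
have key : forall w, Rp S z w -> z' = w.
  move=> w /andP[zw /existsP[a /eqP E]].
  have := H a; rewrite E cards2 zw !inE eqxx => /(_ isT isT) /orP[] /eqP // e.
  by move: z'z; rewrite e eqxx.
by move=> hu hv; rewrite -(key u hu) -(key v hv).
Qed.

Lemma dom2 (S : {set V}) (z : V) : z \in S -> #|S| = 2 -> dom S z.
Proof.
move=> zS cS.
have : #|S :\ z| = 1 by move: (cardsD1 z S); rewrite zS cS; lia.
move/eqP/cards1P => [z' E].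
have z'S : z' \in S :\ z by rewrite E inE.
move: (z'S); rewrite in_setD1 => /andP[z'z z'S'].
exists z' => //; split => // a _ big.
have : tr S a = S.
  apply/eqP; rewrite eqEcard cS big andbT; apply/subsetP => x; rewrite inE => /andP[].
  by [].
by move=> ->.
Qed.

Lemma pcycle_hole (S : {set V}) (c : seq V) : S \subset B -> 2 < size c -> uniq c ->
  {subset c <= S} -> cycle (Rp S) c -> False.
Proof.
move=> SB c2 uc cS cc.
have [x0 _] : exists x0 : V, x0 \in c by case: c c2 {uc cS cc} => [|y ?] //; exists y; rewrite inE eqxx.
set L := size c in c2.
pose C l := nth x0 c l.
pose nx l := l.+1 %% L.
have nxn l : nx l < L by rewrite ltn_mod; lia.
have HR l : l < L -> Rp S (C l) (C (nx l)) by move=> hl; apply: (@nth_of_cycle _ (Rp S) c x0 cc l hl).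
pose al l := odflt x0 [pick a | tr S a == [set C l; C (nx l)]].
have Hal l : l < L -> tr S (al l) = [set C l; C (nx l)].
  move=> hl; have := HR l hl => /andP[_ /existsP[a ha]]; rewrite /al; case: pickP => [a' /eqP //|H0].
  by rewrite H0 in ha.
have CS l : l < L -> C l \in S by move=> hl; apply: cS; apply: mem_nth.
have CB l : l < L -> C l \in B by move=> hl; apply: (subsetP SB); apply: CS.
have Cinj l m : l < L -> m < L -> (C l == C m) = (l == m) by move=> hl hm; apply: nth_uniq.
have mem l m : l < L -> m < L -> (C l \in nbhd adj (al m)) = (l == m) || (l == nx m).
  move=> hl hm; have <- : (C l \in tr S (al m)) = (C l \in nbhd adj (al m)) by rewrite /tr inE CS // andbT.
  by rewrite Hal // !inE !Cinj.
have alA m : m < L -> al m \in A.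
  move=> hm; have : C m \in nbhd adj (al m) by rewrite mem // eqxx.
  by rewrite inE asym => h; exact: (eBA h (CB m hm)).
have alinj l m : l < L -> m < L -> al l = al m -> l = m.
  move=> hl hm e.
  have h1 : C l \in nbhd adj (al m) by rewrite -e mem // eqxx.
  have h2 : C (nx l) \in nbhd adj (al m) by rewrite -e mem ?nxn // eqxx orbT.
  rewrite mem // in h1; rewrite mem ?nxn // /nx in h2; rewrite /nx in h1.
  case: (nxP hl) h1 h2 => [[-> ?]|[-> ?]]; case: (nxP hm) => [[-> ?]|[-> ?]]; lia.
pose hf i := if odd i then al i./2 else C i./2.
have half i : i < 2 * L -> i./2 < L /\ i = odd i + (i./2).*2.
  by move=> hi; rewrite odd_double_half; split => //; move: hi; rewrite -{1}(odd_double_half i); lia.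
have : size (mkseq hf (2 * L)) = 4.
  apply: Hhole; split; first by rewrite size_mkseq; lia.
  split.
    rewrite /mkseq map_inj_in_uniq ?iota_uniq // => i j; rewrite !mem_iota !add0n /= => hi hj.
    have [ha ei] := half i hi; have [hb ej] := half j hj.
    rewrite /hf; case oi: (odd i); case oj: (odd j); rewrite oi in ei; rewrite oj in ej.
    - by move/(alinj _ _ ha hb) => e; lia.
    - by move=> e; exfalso; apply: (nAB (alA _ ha)); rewrite e; apply: CB.
    - by move=> e; exfalso; apply: (nAB (alA _ hb)); rewrite -e; apply: CB.
    - by move/eqP; rewrite Cinj // => /eqP e; lia.
  move=> x1 i j; rewrite size_mkseq => hi hj; rewrite !nth_mkseq //.
  have [ha ei] := half i hi; have [hb ej] := half j hj.
  have i1 := nxP hi; have j1 := nxP hj.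
  rewrite /hf; case oi: (odd i); case oj: (odd j); rewrite oi in ei; rewrite oj in ej.
  - have -> : adj (al i./2) (al j./2) = false.
      by apply/negP => /eAB /(_ (alA _ ha)) hB; apply: (nAB (alA _ hb)).
    by case: i1 => [[-> ?]|[-> ?]]; case: j1 => [[-> ?]|[-> ?]]; lia.
  - have -> : adj (al i./2) (C j./2) = (C j./2 \in nbhd adj (al i./2)) by rewrite inE.
    rewrite mem // /nx.
    by case: (nxP ha) => [[-> ?]|[-> ?]]; case: i1 => [[-> ?]|[-> ?]]; case: j1 => [[-> ?]|[-> ?]]; lia.
  - have -> : adj (C i./2) (al j./2) = (C i./2 \in nbhd adj (al j./2)) by rewrite inE asym.
    rewrite mem // /nx.
    by case: (nxP hb) => [[-> ?]|[-> ?]]; case: i1 => [[-> ?]|[-> ?]]; case: j1 => [[-> ?]|[-> ?]]; lia.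
  - have -> : adj (C i./2) (C j./2) = false.
      by apply/negP => /eBA /(_ (CB _ ha)) hA; apply: (nAB hA); apply: CB.
    by case: i1 => [[-> ?]|[-> ?]]; case: j1 => [[-> ?]|[-> ?]]; lia.
by rewrite size_mkseq; lia.
Qed.

Lemma D2 n (S : {set V}) : #|S| <= n -> S \subset B -> 1 < #|S| ->
  exists z1 z2, [/\ z1 != z2, z1 \in S, z2 \in S, dom S z1 & dom S z2].
Proof.
elim: n S => [|n IH] S cS SB c2; first lia.
case: (eqVneq #|S| 2) => [e2|ne2].
  have [z1 z1S] : exists z, z \in S by apply/set0Pn; rewrite -card_gt0; lia.
  have : #|S :\ z1| = 1 by move: (cardsD1 z1 S); rewrite z1S e2; lia.
  move/eqP/cards1P => [z2 E]; have : z2 \in S :\ z1 by rewrite E inE.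
  rewrite in_setD1 => /andP[z21 z2S].
  by exists z1, z2; split => //; [rewrite eq_sym | exact: dom2 | exact: dom2].
have IHd : forall b, b \in S -> exists z1 z2, [/\ z1 != z2, z1 \in S :\ b, z2 \in S :\ b,
    dom (S :\ b) z1 & dom (S :\ b) z2].
  move=> b bS; apply: IH.
  - by move: (cardsD1 b S); rewrite bS; lia.
  - by apply: subset_trans SB; apply: subD1set.
  - by move: (cardsD1 b S); rewrite bS; lia.
case: (classic (exists2 b, b \in S & forall w, ~~ Rp S b w)) => [[b bS Nb]|NA].
  have [z1 [z2 [z12 z1S z2S d1 d2]]] := IHd b bS.
  move: z1S z2S; rewrite !in_setD1 => /andP[z1b z1S] /andP[z2b z2S].
  by exists z1, z2; split => //; apply: (T1 (b := b)) => //; apply: Nb.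
have allp : forall b, b \in S -> exists w, Rp S b w.
  move=> b bS; apply: NNPP => H; apply: NA; exists b => // w; apply/negP => h; apply: H; by exists w.
case: (classic (exists2 e, e \in S & forall w w', Rp S e w -> Rp S e w' -> w = w'))
  => [[e eS Ue]|NB].
  have [x hx] := allp e eS.
  have [z [zS ze dz]] : exists z, [/\ z \in S, z != e & dom S z].
    have [z1 [z2 [z12 z1S z2S d1 d2]]] := IHd e eS.
    move: z1S z2S; rewrite !in_setD1 => /andP[z1e z1S] /andP[z2e z2S].
    case: (eqVneq z1 x) => [ex|nx].
      exists z2; split => //; apply: (T1 (b := e)) => //; apply/negP => h.
      by move: z12; rewrite ex (Ue _ _ hx h) eqxx.
    exists z1; split => //; apply: (T1 (b := e)) => //; apply/negP => h.
    by move: nx; rewrite (Ue _ _ hx h) eqxx.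
  have [w hw] := allp z zS.
  have [z1 [z2 [z12 z1S z2S d1 d2]]] := IHd z zS.
  move: z1S z2S; rewrite !in_setD1 => /andP[z1z z1S] /andP[z2z z2S].
  have NR : forall y, y != w -> ~~ Rp S z y.
    by move=> y yw; apply/negP => h; move: yw; rewrite (dom_uniq dz hw h) eqxx.
  case: (eqVneq z1 w) => [ew|nw].
    exists z, z2; split => //; first by rewrite eq_sym.
    by apply: (T1 (b := z)) => //; apply: NR; move: z12; rewrite ew eq_sym.
  exists z, z1; split => //; first by rewrite eq_sym.
  by apply: (T1 (b := z)) => //; apply: NR.
exfalso.
have [x0 x0S] : exists x, x \in S by apply/set0Pn; rewrite -card_gt0; lia.
have [c [cs uc cSS cyc]] : exists c : seq V,
    [/\ 2 < size c, uniq c, {subset c <= S} & cycle (Rp S) c].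
  apply: walk_cycle; first by move=> x; rewrite /Rp eqxx.
    by exists x0.
  move=> x p xS; apply: NNPP => H; apply: NB; exists x => // w w' hw hw'.
  have -> : w = p.
    case: (eqVneq w p) => // h; exfalso; apply: H; exists w.
    by rewrite h hw; case/andP: (Rp_in hw) => _ ->.
  have -> : w' = p.
    case: (eqVneq w' p) => // h; exfalso; apply: H; exists w'.
    by rewrite h hw'; case/andP: (Rp_in hw') => _ ->.
  by [].
exact: (pcycle_hole SB cs uc cSS cyc).
Qed.

Lemma tree_small (S : {set V}) : #|S| <= 1 ->
  exists t : rel V, tree_on t S /\ forall a, connected_in t (nbhd adj a :&: S).
Proof.
move=> cS; exists (fun _ _ => false); split.
  split; first by split.
  split; first by [].
  split.
    by move=> x y hx hy; have e := card1eq cS hx hy; subst; exists [::]; rewrite /= eqxx.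
  by move=> [|x [|y c]].
move=> a x y hx hy.
have cW : #|nbhd adj a :&: S| <= 1 by apply: leq_trans cS; apply: subset_leq_card; apply: subsetIr.
by have e := card1eq cW hx hy; subst; exists [::]; rewrite /= eqxx.
Qed.

Lemma treeS n (S : {set V}) : #|S| <= n -> S \subset B ->
  exists t : rel V, tree_on t S /\ forall a, connected_in t (nbhd adj a :&: S).
Proof.
elim: n S => [|n IH] S cS SB; first by apply: tree_small; lia.
case: (leqP #|S| 1) => [c1|c2]; first exact: tree_small.
have [z [_ [_ [zS _ dz _]]]] := D2 (leqnn _) SB c2.
case: dz => z' z'S [z'z Hd].
have [t' [[[t'sym t'irr] [t'S [t'conn t'acy]]] t'sets]] : exists t' : rel V,
    tree_on t' (S :\ z) /\ forall a, connected_in t' (nbhd adj a :&: (S :\ z)).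
  apply: IH; last by apply: subset_trans SB; apply: subD1set.
  by move: (cardsD1 z S); rewrite zS; lia.
have zz' : (z == z') = false by rewrite eq_sym; apply/negbTE.
have t'z : forall y, t' z y = false.
  by move=> y; apply/negP => /t'S [] ; rewrite in_setD1 eqxx.
have t'z2 : forall y, t' y z = false.
  by move=> y; apply/negP => /t'S [] _; rewrite in_setD1 eqxx.
pose t x y := t' x y || ((x == z) && (y == z')) || ((x == z') && (y == z)).
have sub : forall x p, path t' x p -> path t x p.
  by move=> x p; apply: sub_path => u v h; rewrite /t h.
have CA : forall W : {set V}, connected_in t' (W :\ z) ->
    (z \in W -> (z' \in W) || (#|W| <= 1)) -> connected_in t W.
  move=> W HW Hz x y hx hy.
  have allW : forall p, all (mem (W :\ z)) p -> all (mem W) p.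
    by move=> p; apply: sub_all => u; rewrite /= in_setD1 => /andP[].
  case: (eqVneq x z) => [exz|nxz]; case: (eqVneq y z) => [eyz|nyz].
  - by subst; exists [::]; rewrite /= eqxx.
  - subst x.
    have z'W : z' \in W.
      case/orP: (Hz hx) => // h; by move: nyz; rewrite (card1eq h hy hx) eqxx.
    have i1 : z' \in W :\ z by rewrite in_setD1 z'z z'W.
    have i2 : y \in W :\ z by rewrite in_setD1 nyz hy.
    have [p /and3P[pp lp ap]] := HW z' y i1 i2.
    exists (z' :: p); rewrite /= (sub _ _ pp) lp /t eqxx /= z'W allW //.
    by rewrite eqxx orbT.
  - subst y.
    have z'W : z' \in W.
      case/orP: (Hz hy) => // h; by move: nxz; rewrite (card1eq h hx hy) eqxx.
    have i1 : z' \in W :\ z by rewrite in_setD1 z'z z'W.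
    have i2 : x \in W :\ z by rewrite in_setD1 nxz hx.
    have [p /and3P[pp /eqP lp ap]] := HW x z' i2 i1.
    exists (rcons p z); rewrite rcons_path (sub _ _ pp) lp last_rcons eqxx all_rcons /= hy allW //.
    by rewrite /t !eqxx !andbT !orbT.
  - have i1 : x \in W :\ z by rewrite in_setD1 nxz hx.
    have i2 : y \in W :\ z by rewrite in_setD1 nyz hy.
    have [p /and3P[pp lp ap]] := HW x y i1 i2.
    by exists p; rewrite (sub _ _ pp) lp allW.
exists t; split.
  split.
    split.
      move=> x y; rewrite /t t'sym -!orbA; congr (_ || _); rewrite orbC.
      by congr (_ || _); rewrite andbC.
    move=> x; rewrite /t t'irr /=; apply/negP => /orP[] /andP[/eqP -> /eqP e];
      by move: z'z; rewrite e eqxx.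
  split.
    move=> x y; rewrite /t => /orP[/orP[h|/andP[/eqP -> /eqP ->]]|/andP[/eqP -> /eqP ->]] //.
    by case: (t'S _ _ h); rewrite !in_setD1 => /andP[_ ->] /andP[_ ->].
  split.
    by apply: CA => //; rewrite z'S.
  move=> c c2' uc; apply/negP => cc.
  case: (boolP (z \in c)) => zc.
    move: uc cc c2'; case/splitPr: zc => c1 c3.
    have -> : size (c1 ++ z :: c3) = size (z :: c3 ++ c1) by rewrite -(size_rot (size c1)) rot_size_cat.
    rewrite -(rot_uniq (size c1)) -(rot_cycle (size c1)) rot_size_cat /=.
    move: (c3 ++ c1) => d; case: d => [|y [|u d]] //=.
    move=> /andP[_ /andP[yd _]].
    rewrite rcons_path /t t'z t'z2 eqxx /= zz' /= !andbF !orbF !andbT.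
    case/and4P => /eqP ey _ _ /eqP el _.
    by move: yd; rewrite ey -el mem_last.
  have := t'acy c c2' uc; rewrite -(@eq_in_cycle _ (predC1 z) t) ?cc //.
    move=> x y /= xz yz; rewrite /t.
    by rewrite (negbTE xz) (negbTE yz) !andbF !orbF.
  by apply/allP => x xc /=; apply/eqP => e; subst; rewrite xc in zc.
move=> a; apply: CA; first by rewrite -setIDA; apply: t'sets.
move=> zW; case: (leqP #|nbhd adj a :&: S| 1) => [h|big]; first by rewrite orbT.
by rewrite orbF (Hd a zW big).
Qed.

End AB.


Theorem mainTheorem17 (V : finType) (adj : rel V) (A B A1 A2 : {set V}) :
  simple_graph adj ->
  bipartition adj A B ->
  A = A1 :|: A2 ->
  [disjoint A1 & A2] ->
  laminar adj A1 ->
  laminar adj A2 ->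
  ((forall c : seq V, hole adj c -> size c = 4) <->
   (exists t : rel V, tree_on t B /\
      forall a, a \in A -> connected_in t (nbhd adj a))).
Proof.
move=> Hs Hb HA Hd L1 L2; split.
- move=> Hh.
  have [t [tt ts]] := treeS Hs Hb Hh (leqnn #|B|) (subxx B).
  exists t; split => // a aA.
  have -> : nbhd adj a = nbhd adj a :&: B.
    apply/setP => x; rewrite !inE; case h: (adj a x) => //=.
    by rewrite (eAB Hb h aA).
  exact: ts.
- move=> [t [tt ts]] c hc.
  exact: (b_to_a Hs Hb HA Hd L1 L2 tt ts hc).
Qed.
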